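(* For any cyclic CFSM protocol $\mathbf P$ with communication graph $(N,E)$ the following four conditions are equivalent: (a) $\mathbf P$ has the recognizable channel property; (b) $\mathbf P$ has the rational channel property; (c) for every $\beta\in E$ and every composite state $S$, the set $Q_\beta(S)=\{x_\beta\in M_\beta^*: (x_\xi:\xi\in E)\in\mathbf L(S)\text{ and } x_\xi=\lambda \text{ for } \xi\neq\beta\}$ is regular; (d) there exists $\beta\in E$ such that $Q_\beta(S)$ is regular for every composite state $S$.
   Context: A CFSM protocol $\mathbf P$ has a finite directed communication graph $G=(N,E)$ (edge $\xi$ has tail $-\xi$, head $+\xi$), pairwise disjoint finite message sets $M_\xi$ ($\xi\in E$), and for each $j\in N$ a finite state machine $F_j=(K_j,\Sigma_j,T_j,h_j)$: finite state set $K_j$, initial state $h_j$, alphabet $\Sigma_j=\{+b: b\in M_\xi,\ j=+\xi\}\cup\{-b: b\in M_\xi,\ j=-\xi\}$, transitions $T_j\subseteq K_j\times\Sigma_j\times K_j$ ($+b$ = receive, $-b$ = send). A composite state is $S=(p_j:j\in N)$, $p_j\in K_j$; a channel content is $C=(x_\xi:\xi\in E)$, $x_\xi\in M_\xi^*$; global states are pairs $(S,C)$; $C^0$ has all components equal to the empty word $\lambda$; the initial global state is $(S^0,C^0)$, $S^0=(h_j:j\in N)$. A step: some machine $F_i$ takes $p_i\xrightarrow{-b}q_i$ with $b\in M_\beta$, $i=-\beta$, appending $b$ to the end of $x_\beta$; or takes $p_i\xrightarrow{+b}q_i$ with $b\in M_\beta$, $i=+\beta$, provided $x_\beta$ begins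 with $b$, removing it; everything else unchanged. $\vdash^*$ denotes reachability by finitely many steps. $\mathbf L(S)=\{C: (S^0,C^0)\vdash^*(S,C)\}\subseteq\prod_{\xi\in E}M_\xi^*$. A subset of the monoid $\prod_{\xi\in E}M_\xi^*$ (componentwise concatenation) is rational if it belongs to the smallest family containing the finite sets and closed under union, product and Kleene star; it is recognizable if it is a finite union of sets $\prod_{\xi\in E}L_\xi$ with each $L_\xi\subseteq M_\xi^*$ a regular language. $\mathbf P$ has the rational (resp. recognizable) channel property if $\mathbf L(S)$ is rational (resp. recognizable) for every composite state $S$. $\mathbf P$ is cyclic if $G$ is a directed cycle. *)

(* Defs.v *)
From mathcomp Require Import all_boot.
Set Implicit Arguments. Unset Strict Implicit. Unset Printing Implicit Defensive.

(* Letters of the machines: [Snd e b] is "-b" (send b on channel e),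
   [Rcv e b] is "+b" (receive b from channel e), with b : M e. *)
Inductive action (E : Type) (M : E -> Type) : Type :=
  | Snd (e : E) (b : M e)
  | Rcv (e : E) (b : M e).

Definition in_alphabet (N E : eqType) (tl hd : E -> N) (M : E -> Type)
  (j : N) (a : action M) : bool :=
  match a with
  | Snd e _ => tl e == j
  | Rcv e _ => hd e == j
  end.

(* A CFSM protocol. Message sets are disjoint by construction (dependent
   family msg indexed by the edges). *)
Record cfsm := Cfsm {
  node : finType;
  edge : finType;
  tl : edge -> node;
  hd : edge -> node;
  msg : edge -> finType;
  st : node -> finType;
  init : forall j, st j;
  trans : forall j, st j -> action msg -> st j -> bool;
  trans_wf : forall j p a q, @trans j p a q -> in_alphabet tl hd j a
}.

Definition cstate (P : cfsm) := forall j : node P, st j.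
Definition chan (P : cfsm) := forall e : edge P, seq (msg e).
Definition chan0 (P : cfsm) : chan P := fun e => [::].
Definition init_state (P : cfsm) : cstate P := fun j => init j.

Definition step (P : cfsm) (S : cstate P) (C : chan P)
    (S' : cstate P) (C' : chan P) : Prop :=
  exists (i : node P) (q : st i),
    S' i = q /\ (forall j, j != i -> S' j = S j) /\
    exists (e : edge P) (b : msg e),
      (forall xi, xi != e -> C' xi = C xi) /\
      ( (tl e = i /\ trans (S i) (@Snd _ (fun x => msg x) e b) q /\ C' e = rcons (C e) b)
     \/ (hd e = i /\ trans (S i) (@Rcv _ (fun x => msg x) e b) q /\ C e = b :: C' e) ).

Inductive reach (P : cfsm) : cstate P -> chan P -> Prop :=
  | reach0 : @reach P (@init_state P) (@chan0 P)
  | reachS S C S' C' : @reach P S C -> step S C S' C' -> @reach P S' C'.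

Definition Lang (P : cfsm) (S : cstate P) : chan P -> Prop :=
  fun C => reach S C.

Definition mcat (E : Type) (M : E -> Type) (C1 C2 : forall e, seq (M e))
  : forall e, seq (M e) := fun e => C1 e ++ C2 e.
Definition munit (E : Type) (M : E -> Type) : forall e, seq (M e) :=
  fun e => [::].

Inductive mstar (E : Type) (M : E -> Type) (A : (forall e, seq (M e)) -> Prop)
  : (forall e, seq (M e)) -> Prop :=
  | mstar0 : mstar A (munit M)
  | mstarS C1 C2 : A C1 -> mstar A C2 -> mstar A (mcat C1 C2).

(* Rational subsets: smallest family (of sets, i.e. up to set equality)
   containing finite sets and closed under union, product and star. *)
Inductive rational (E : Type) (M : E -> Type)
  : ((forall e, seq (M e)) -> Prop) -> Prop :=
  | rat_fin (s : list (forall e, seq (M e))) :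
      rational (fun C => exists2 i, i < size s & C = nth (munit M) s i)
  | rat_union A B : rational A -> rational B ->
      rational (fun C => A C \/ B C)
  | rat_prod A B : rational A -> rational B ->
      rational (fun C => exists C1 C2, A C1 /\ B C2 /\ C = mcat C1 C2)
  | rat_star A : rational A -> rational (mstar A)
  | rat_ext A B : rational A -> (forall C, A C <-> B C) -> rational B.

Definition regular (A : finType) (L : seq A -> Prop) : Prop :=
  exists (Q : finType) (q0 : Q) (d : Q -> A -> Q) (F : pred Q),
    forall w, L w <-> F (foldl d q0 w).

Definition recognizable (E : Type) (M : E -> finType)
  (A : (forall e, seq (M e)) -> Prop) : Prop :=
  exists (n : nat) (Ls : 'I_n -> forall e, seq (M e) -> Prop),
    (forall i e, regular (Ls i e)) /\
    (forall C, A C <-> exists i, forall e, Ls i e (C e)).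

Definition rational_channel_property (P : cfsm) : Prop :=
  forall S : cstate P, rational (@Lang P S).

Definition recognizable_channel_property (P : cfsm) : Prop :=
  forall S : cstate P, recognizable (@Lang P S).

Definition Qset (P : cfsm) (beta : edge P) (S : cstate P) : seq (msg beta) -> Prop :=
  fun x => exists C : chan P, Lang S C /\ C beta = x /\
             (forall xi, xi != beta -> C xi = [::]).

Definition cyclic (P : cfsm) : Prop :=
  exists (k : nat) (v : 'I_k.+1 -> node P) (w : 'I_k.+1 -> edge P),
    bijective v /\ bijective w /\
    forall i, tl (w i) = v i /\ hd (w i) = v (ordS i).

(* Main.v *)
Require Import Defs.
From mathcomp Require Import all_boot.
From Stdlib Require Import ClassicalEpsilon FunctionalExtensionality PropExtensionality.
From mathcomp Require Import zify.
Set Implicit Arguments. Unset Strict Implicit. Unset Printing Implicit Defensive.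


Definition pbool (P : Prop) : bool :=
  if excluded_middle_informative P then true else false.
Lemma pboolP (P : Prop) : reflect P (pbool P).
Proof. by rewrite /pbool; case: excluded_middle_informative => h; constructor. Qed.

Lemma cat_split (T : Type) (u w w1 w2 : seq T) : u ++ w = w1 ++ w2 ->
  (exists y, w1 = u ++ y /\ w = y ++ w2) \/ (exists x, u = w1 ++ x /\ w2 = x ++ w).
Proof.
elim: u w1 => [|a u IH] [|b w1] /=.
- by move=> ->; left; exists [::].
- by move=> ->; left; exists (b :: w1).
- by move=> <-; right; exists (a :: u).
- case=> -> /IH [[y [-> ->]]|[x [-> ->]]]; [left; exists y | right; exists x]; by [].
Qed.

Lemma catI (T : Type) (s a b : seq T) : s ++ a = s ++ b -> a = b.
Proof. by elim: s => //= x s IH [] /IH. Qed.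

Lemma map_cat_inv (T U : Type) (f : T -> U) (s : seq T) s1 s2 :
  map f s = s1 ++ s2 -> exists t1 t2, s = t1 ++ t2 /\ map f t1 = s1 /\ map f t2 = s2.
Proof.
elim: s s1 => [|x s IH] [|y s1] //=.
- by case: s2 => // _; exists [::], [::].
- by move=> <-; exists [::], (x :: s).
- case=> <- /IH [t1 [t2 [-> [<- <-]]]]; by exists (x :: t1), t2.
Qed.

Definition RQ (A : Type) (L : seq A -> Prop) (x : seq A) : seq A -> Prop :=
  fun r => L (r ++ x).

Section FQ.
Variable A : finType.
Implicit Types L : seq A -> Prop.

Definition FQ L := exists (T : finType) (g : seq A -> T) (h : T -> seq A -> Prop),
  forall u w, L (u ++ w) <-> h (g u) w.

Lemma regular_FQ L : regular L -> FQ L.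
Proof.
move=> [Q [q0 [d [F H]]]]; exists Q, (foldl d q0), (fun q w => F (foldl d q w)).
by move=> u w; rewrite H foldl_cat.
Qed.

Lemma FQ_regular L : FQ L -> regular L.
Proof.
move=> [T [g [h H]]].
have Hg : forall x y, g x = g y -> forall w, L (x ++ w) <-> L (y ++ w).
  by move=> x y e w; rewrite !H e.
pose rep (t : T) : option (seq A) :=
  match excluded_middle_informative (exists u, g u = t) with
  | left H => Some (proj1_sig (constructive_indefinite_description _ H))
  | right _ => None end.
have repS : forall u, exists u', rep (g u) = Some u' /\ g u' = g u.
  move=> u; rewrite /rep; case: excluded_middle_informative => [E|[]]; last by exists u.
  case: constructive_indefinite_description => /= u' e; by exists u'.
pose d t a := match rep t with Some u => g (rcons u a) | None => t end.
pose F t := match rep t with Some u => pbool (L u) | None => false end.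
exists T, (g [::]), d, F.
have inv : forall u, exists u', foldl d (g [::]) u = g u' /\
   forall w, L (u ++ w) <-> L (u' ++ w).
  elim/last_ind => [|u a [u' [e1 e2]]]; first by exists [::].
  have [u'' [e3 e4]] := repS u'.
  exists (rcons u'' a); rewrite foldl_rcons e1 /d e3; split => // w.
  rewrite !cat_rcons e2; exact: Hg.
move=> u; have [u' [e1 e2]] := inv u; have [u'' [e3 e4]] := repS u'.
rewrite e1 /F e3; have := e2 [::]; rewrite !cats0 => ->.
have := Hg _ _ e4 [::]; rewrite !cats0 => <-.
by apply: (iff_trans _ (rwP (pboolP _))).
Qed.

Lemma FQ_ext L L' : (forall w, L w <-> L' w) -> FQ L -> FQ L'.
Proof.
move=> e [T [g [h H]]]; exists T, g, h => u w; rewrite -e; exact: H.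
Qed.

Lemma FQ_empty : FQ (fun _ => False).
Proof. by exists unit, (fun _ => tt), (fun _ _ => False). Qed.

Lemma FQ_single v : FQ (fun w => w = v).
Proof.
exists (option 'I_(size v).+1).
exists (fun u => if prefix u v then Some (inord (size u)) else None).
exists (fun (t : option 'I_(size v).+1) w => match t with Some i => w = drop i v | None => False end).
move=> u w; case: ifP => [/prefixP [v' ->]|Hp].
  rewrite inordK ?ltnS ?size_cat ?leq_addr // drop_size_cat //.
  by split => [/catI|->].
split => // e; move: Hp; by rewrite -e prefix_prefix.
Qed.

Lemma FQ_union L1 L2 : FQ L1 -> FQ L2 -> FQ (fun w => L1 w \/ L2 w).
Proof.
move=> [T1 [g1 [h1 H1]]] [T2 [g2 [h2 H2]]].
exists (T1 * T2)%type, (fun u => (g1 u, g2 u)), (fun t w => h1 t.1 w \/ h2 t.2 w).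
by move=> u w /=; rewrite H1 H2.
Qed.

Lemma FQ_cond (Pr : Prop) L : FQ L -> FQ (fun w => Pr /\ L w).
Proof.
move=> H; case: (classic Pr) => hp.
  by apply: FQ_ext H => w; split => // [[]].
by apply: FQ_ext FQ_empty => w; split => // [[]].
Qed.

Lemma FQ_finite (I : Type) (s : list I) (Pr : I -> Prop) (f : I -> seq A) :
  FQ (fun x => exists i, List.In i s /\ Pr i /\ x = f i).
Proof.
elim: s => [|a s IH] /=.
  by apply: FQ_ext FQ_empty => w; split => // [[i []]].
apply: FQ_ext (FQ_union (FQ_cond (Pr a) (FQ_single (f a))) IH) => w; split.
- case=> [[pa ->]|[i [? [? ->]]]]; [exists a | exists i]; by auto.
- case=> i [[<-|hi] [pi ->]]; [left | right; exists i]; by auto.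
Qed.

Definition lcat L1 L2 := fun w => exists w1 w2, w = w1 ++ w2 /\ L1 w1 /\ L2 w2.

Lemma FQ_cat L1 L2 : FQ L1 -> FQ L2 -> FQ (lcat L1 L2).
Proof.
move=> [T1 [g1 [h1 H1]]] [T2 [g2 [h2 H2]]].
exists (T1 * {ffun T2 -> bool})%type.
exists (fun u => (g1 u, [ffun t => pbool (exists v x, u = v ++ x /\ L1 v /\ g2 x = t)])).
exists (fun (t : T1 * {ffun T2 -> bool}) w => (exists y z, w = y ++ z /\ h1 t.1 y /\ L2 z) \/
                   (exists t2, t.2 t2 /\ h2 t2 w)).
move=> u w /=; split.
- move=> [w1 [w2 [/cat_split [[y [-> ->]]|[x [-> ->]]] [l1 l2]]]].
    by left; exists y, w2; rewrite -H1.
  right; exists (g2 x); rewrite ffunE -H2; split => //.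
  by apply/pboolP; exists w1, x.
- case=> [[y [z [-> [hy hz]]]]|[t2 []]].
    by exists (u ++ y), z; rewrite catA; do !split => //; apply/H1.
  rewrite ffunE => /pboolP [v [x [-> [lv <-]]]] /H2 hx.
  by exists v, (x ++ w); rewrite catA.
Qed.

Inductive fstar L : seq A -> Prop :=
  | fstar0 : fstar L [::]
  | fstarS u v : L u -> fstar L v -> fstar L (u ++ v).

Lemma fstar_cat L u v : fstar L u -> fstar L v -> fstar L (u ++ v).
Proof. by elim=> // x y hx _ IH hv; rewrite -catA; apply: fstarS => //; apply: IH. Qed.

Lemma fstar_split L u w : fstar L (u ++ w) <->
  (fstar L u /\ fstar L w) \/
  exists v x y z, u = v ++ x /\ fstar L v /\ w = y ++ z /\ L (x ++ y) /\ fstar L z.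
Proof.
split.
- have : forall s, fstar L s -> forall u w, s = u ++ w -> (fstar L u /\ fstar L w) \/
    exists v x y z, u = v ++ x /\ fstar L v /\ w = y ++ z /\ L (x ++ y) /\ fstar L z.
    move=> s; elim => [|k r hk hr IH] u0 w0.
      by case: u0 => [|? ?] //= <-; left; split; constructor.
    move/esym/cat_split => [[y [ek ew]]|[x [eu er]]].
      by right; exists [::], u0, y, r; rewrite -ek; do !split => //; constructor.
    have [[hx hw]|[v [x' [y [z [ex [hv [ew [hxy hz]]]]]]]]] := IH _ _ er.
      by left; split => //; rewrite eu; constructor.
    right; exists (k ++ v), x', y, z; rewrite eu ex catA; do !split => //.
    by constructor.
  by move=> H hs; apply: (H _ hs).
- case=> [[hu hw]|[v [x [y [z [-> [hv [-> [hxy hz]]]]]]]]]; first exact: fstar_cat.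
  rewrite -catA (catA x); apply: fstar_cat => //.
  exact: fstarS.
Qed.

Lemma FQ_star L : FQ L -> FQ (fstar L).
Proof.
move=> [T1 [g1 [h1 H1]]].
exists (bool * {ffun T1 -> bool})%type.
exists (fun u => (pbool (fstar L u),
   [ffun t => pbool (exists v x, u = v ++ x /\ fstar L v /\ g1 x = t)])).
exists (fun (t : bool * {ffun T1 -> bool}) w => (t.1 /\ fstar L w) \/
   exists t1, t.2 t1 /\ exists y z, w = y ++ z /\ h1 t1 y /\ fstar L z).
move=> u w /=; rewrite fstar_split; split.
- case=> [[hu hw]|[v [x [y [z [eu [hv [ew [hxy hz]]]]]]]]].
    by left; split => //; apply/pboolP.
  right; exists (g1 x); rewrite ffunE; split; first by apply/pboolP; exists v, x.
  by exists y, z; rewrite -H1.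
- case=> [[/pboolP hu hw]|[t1 []]]; first by left.
  rewrite ffunE => /pboolP [v [x [eu [hv <-]]]] [y [z [ew [hy hz]]]].
  by right; exists v, x, y, z; do !split => //; apply/H1.
Qed.

End FQ.


Definition dupd (I : eqType) (T : I -> Type) (f : forall i, T i) (i : I) (x : T i) :
  forall j, T j :=
  fun j => match i =P j with ReflectT h => eq_rect i T x j h | ReflectF _ => f j end.

Arguments dupd {I T} f i x j.

Lemma dupd_eq (I : eqType) (T : I -> Type) (f : forall i, T i) i x : dupd f i x i = x.
Proof. by rewrite /dupd; case: eqP => // h; rewrite (eq_axiomK h). Qed.

Lemma dupd_neq (I : eqType) (T : I -> Type) (f : forall i, T i) i x j :
  j != i -> dupd f i x j = f j.
Proof. by move=> ne; rewrite /dupd; case: eqP => // h; exfalso; move: ne; rewrite -h eqxx. Qed.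

Lemma nth_In (T : Type) (d : T) (s : seq T) C :
  (exists2 i, i < size s & C = nth d s i) <-> List.In C s.
Proof.
elim: s => [|a s IH] /=; first by split => [[]|].
split.
- case=> -[_ ->|i]; first by left.
  by rewrite ltnS => hi e; right; apply/IH; exists i.
- case=> [<-|/IH [i hi e]]; first by exists 0.
  by exists i.+1.
Qed.

(* ---------- words / DFA walks (McNaughton-Yamada) ---------- *)
Section Walk.
Variables (A Q : finType) (d : Q -> A -> Q).

Definition wk (X : seq Q) p q (w : seq A) :=
  foldl d p w = q /\ forall i, 0 < i < size w -> foldl d p (take i w) \in X.

Lemma wk_mono X Y p q w : {subset X <= Y} -> wk X p q w -> wk Y p q w.
Proof. by move=> s [e h]; split => // i /h /s. Qed.

Lemma wk_cat Y p r q u v : wk Y p r u -> wk Y r q v -> r \in Y -> wk Y p q (u ++ v).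
Proof.
move=> [e1 h1] [e2 h2] rY; split; first by rewrite foldl_cat e1.
move=> i /andP [i0]; rewrite size_cat take_cat.
case: (ltnP i (size u)) => [iu _|ui iuv]; first by apply: h1; rewrite i0 iu.
rewrite foldl_cat e1; case: (ltnP 0 (i - size u)) => [p0|].
  by apply: h2; rewrite p0 /= ltn_subLR // addnC.
by rewrite leqn0 => /eqP ->; rewrite take0.
Qed.

Lemma wk_nil p q w : wk [::] p q w <-> (w = [::] /\ p = q) \/ (exists a, w = [:: a] /\ d p a = q).
Proof.
split.
- case: w => [[e _]|a [|b w] [e h]]; first by left.
    by right; exists a.
  by have := h 1 isT.
- case=> [[-> ->]|[a [-> <-]]]; split => //= i /andP [h1 h2]; by case: i h1 h2 => [|[]].
Qed.

Lemma wk_first s0 X p q w : wk (s0 :: X) p q w ->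
  wk X p q w \/ exists i, 0 < i < size w /\ wk X p s0 (take i w) /\ wk (s0 :: X) s0 q (drop i w).
Proof.
move=> [e h].
case: (classic (exists i, (0 < i < size w) && (foldl d p (take i w) == s0))) => [ex|nex].
  right; case: (ex_minnP ex) => i /andP [hi /eqP ei] min.
  have iw : i <= size w by case/andP: hi => _ /ltnW.
  exists i; split => //; split.
    split => // j; rewrite size_takel // => /andP [j0 ji].
    rewrite take_takel; last exact: ltnW.
    have jw : 0 < j < size w by rewrite j0 (ltn_trans ji) //; case/andP: hi.
    have := h j jw; rewrite inE => /orP [/eqP ej|] //.
    have := min j; rewrite jw ej eqxx => /(_ isT).
    by rewrite leqNgt ji.
  split; first by rewrite -ei -foldl_cat cat_take_drop.
  move=> j; rewrite size_drop => /andP [j0 jl].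
  have := h (i + j); rewrite takeD foldl_cat ei; apply.
  by rewrite addn_gt0 j0 orbT /= -ltn_subRL.
left; split => // i hi; have := h i hi; rewrite inE => /orP [/eqP e2|] //.
by case: nex; exists i; rewrite hi e2 eqxx.
Qed.

Lemma wk_loops s0 X q n v : size v <= n -> wk (s0 :: X) s0 q v ->
  exists v2 v3, v = v2 ++ v3 /\ fstar (wk X s0 s0) v2 /\ wk X s0 q v3.
Proof.
elim: n v => [|n IH] v hn /wk_first [hv|[i [/andP [i0 iv] [h1 h2]]]].
- by exists [::], v; split => //; split => //; constructor.
- by have := leq_trans (leq_trans i0 (ltnW iv)) hn.
- by exists [::], v; split => //; split => //; constructor.
- have [|v2 [v3 [e [hs hw]]]] := IH (drop i v) _ h2.
    by rewrite size_drop leq_subLR (leq_trans hn) // -add1n leq_add2r.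
  exists (take i v ++ v2), v3; rewrite -catA -e cat_take_drop; split => //; split => //.
  by constructor.
Qed.

Lemma wk_cons s0 X p q w : wk (s0 :: X) p q w <->
  wk X p q w \/ exists w1 w2 w3, w = w1 ++ w2 ++ w3 /\ wk X p s0 w1 /\
      fstar (wk X s0 s0) w2 /\ wk X s0 q w3.
Proof.
have sub : {subset X <= s0 :: X} by move=> x hx; rewrite inE hx orbT.
have s0in : s0 \in s0 :: X by rewrite inE eqxx.
split.
- move/wk_first => [h|[i [_ [h1 h2]]]]; first by left.
  have [v2 [v3 [e [hs hw]]]] := wk_loops (leqnn _) h2.
  by right; exists (take i w), v2, v3; rewrite -e cat_take_drop.
- case=> [|[w1 [w2 [w3 [-> [h1 [h2 h3]]]]]]]; first exact: wk_mono.
  have hl : forall v, fstar (wk X s0 s0) v -> wk (s0 :: X) s0 s0 v.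
    move=> v; elim => [|x y hx _ hy]; first by split => // i; rewrite andbF.
    by apply: (wk_cat _ _ s0in) => //; apply: wk_mono hx.
  apply: (wk_cat _ _ s0in); first by apply: wk_mono h1.
  by apply: (wk_cat _ _ s0in); [apply: hl | apply: wk_mono h3].
Qed.

End Walk.

Section Rat.
Variables (E : finType) (M : E -> finType).
Local Notation chn := (forall e, seq (M e)).
Implicit Types X Y : chn -> Prop.

Lemma rat_ext' X Y : rational X -> (forall C, X C <-> Y C) -> rational Y.
Proof. exact: rat_ext. Qed.

Lemma rat_empty : rational (fun _ : chn => False).
Proof.
apply: rat_ext' (rat_fin [::]) _ => C; by split => // [[]].
Qed.

Definition slice (b : E) X : seq (M b) -> Prop :=
  fun x => exists C, X C /\ C b = x /\ forall xi, xi != b -> C xi = [::].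
Arguments slice b X _ : clear implicits.

Lemma rational_slice b X : rational X -> FQ (slice b X).
Proof.
elim => {X}.
- move=> s; apply: FQ_ext (FQ_finite s (fun C => forall xi, xi != b -> C xi = [::])
                                   (fun C => C b)) => w; split.
    by move=> [C [hC [o ->]]]; exists C; split => //; apply/nth_In.
  by move=> [C [/nth_In hC [<- o]]]; exists C.
- move=> X Y _ hX _ hY; apply: FQ_ext (FQ_union hX hY) => w; split.
    by case=> [[C [hC [e1 e2]]]|[C [hC [e1 e2]]]]; exists C; do !split => //; [left|right].
  by move=> [C [[hC|hC] [e1 e2]]]; [left|right]; exists C.
- move=> X Y _ hX _ hY; apply: FQ_ext (FQ_cat hX hY) => w; split.
    move=> [w1 [w2 [-> [[C1 [h1 [e1 o1]]] [C2 [h2 [e2 o2]]]]]]].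
    exists (mcat C1 C2); split; first by exists C1, C2.
    by rewrite /mcat e1 e2; split => // xi /[dup] /o1 -> /o2 ->.
  move=> [C [[C1 [C2 [h1 [h2 ->]]]] [<- o]]].
  exists (C1 b), (C2 b); split => //; split.
    exists C1; split => //; split => // xi /o; rewrite /mcat.
    by case: (C1 xi).
  exists C2; split => //; split => // xi /o; rewrite /mcat.
  by case: (C1 xi).
- move=> X _ hX; apply: FQ_ext (FQ_star hX) => w; split.
    elim => [|u v [C1 [h1 [e1 o1]]] _ [C2 [h2 [e2 o2]]]].
      by exists (munit M); do !split => //; constructor.
    exists (mcat C1 C2); split; first by constructor.
    by rewrite /mcat e1 e2; split => // xi /[dup] /o1 -> /o2 ->.
  move=> [C [hC [<- o]]]; elim: hC o => [|C1 C2 h1 _ IH] o; first by constructor.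
  have o1 : forall xi, xi != b -> C1 xi = [::].
    by move=> xi /o; rewrite /mcat; case: (C1 xi).
  have o2 : forall xi, xi != b -> C2 xi = [::].
    by move=> xi /o; rewrite /mcat => /[dup] e; case: (C1 xi) e.
  rewrite /mcat; constructor; last exact: IH.
  by exists C1.
- move=> X Y _ hX e; apply: FQ_ext hX => w.
  by split => [] [C [hC h]]; exists C; split => //; apply/e.
Qed.

Definition EmbL (e : E) (L : seq (M e) -> Prop) : chn -> Prop :=
  fun C => L (C e) /\ forall xi, xi != e -> C xi = [::].

Definition embw (e : E) (x : seq (M e)) : chn :=
  @dupd E (fun e => seq (M e)) (munit (fun e => M e)) e x.

Lemma EmbL_embw (e : E) (L : seq (M e) -> Prop) (C : chn) : EmbL L C <-> exists x, L x /\ C = embw x.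
Proof.
split.
- move=> [hL o]; exists (C e); split => //.
  apply: functional_extensionality_dep => xi; case: (eqVneq xi e) => [->|ne].
    by rewrite /embw dupd_eq.
  by rewrite /embw dupd_neq // o.
- move=> [x [hx ->]]; split; first by rewrite /embw dupd_eq.
  by move=> xi ne; rewrite /embw dupd_neq.
Qed.

Lemma rat_EmbL_fin e (s : list (seq (M e))) : rational (EmbL (fun x => List.In x s)).
Proof.
apply: rat_ext' (rat_fin (map (@embw e) s)) _ => C.
rewrite nth_In EmbL_embw List.in_map_iff; split.
  by move=> [x [<- hx]]; exists x.
by move=> [x [hx ->]]; exists x.
Qed.

Lemma rat_EmbL_ext e (L L' : seq (M e) -> Prop) :
  rational (EmbL L) -> (forall w, L w <-> L' w) -> rational (EmbL L').
Proof.
move=> h ee; apply: rat_ext' h _ => C; rewrite /EmbL ee //.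
Qed.

Lemma rat_EmbL_union e (L1 L2 : seq (M e) -> Prop) :
  rational (EmbL L1) -> rational (EmbL L2) -> rational (EmbL (fun w => L1 w \/ L2 w)).
Proof.
move=> h1 h2; apply: rat_ext' (rat_union h1 h2) _ => C; rewrite /EmbL; tauto.
Qed.

Lemma embw_cat e (u v : seq (M e)) : embw (u ++ v) = mcat (embw u) (embw v).
Proof.
apply: functional_extensionality_dep => xi; rewrite /mcat.
case: (eqVneq xi e) => [->|ne]; first by rewrite /embw !dupd_eq.
by rewrite /embw !dupd_neq.
Qed.

Lemma rat_EmbL_cat e (L1 L2 : seq (M e) -> Prop) :
  rational (EmbL L1) -> rational (EmbL L2) -> rational (EmbL (lcat L1 L2)).
Proof.
move=> h1 h2; apply: rat_ext' (rat_prod h1 h2) _ => C; split.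
- move=> [C1 [C2 [[l1 o1] [[l2 o2] ->]]]]; split; first by exists (C1 e), (C2 e).
  by move=> xi ne; rewrite /mcat o1 // o2.
- move/EmbL_embw => [x [[w1 [w2 [-> [l1 l2]]]] ->]].
  exists (embw w1), (embw w2); rewrite embw_cat; split; first by apply/EmbL_embw; exists w1.
  by split => //; apply/EmbL_embw; exists w2.
Qed.

Lemma rat_EmbL_star e (L : seq (M e) -> Prop) :
  rational (EmbL L) -> rational (EmbL (fstar L)).
Proof.
move=> h; apply: rat_ext' (rat_star h) _ => C; split.
- elim => [|C1 C2 [l1 o1] _ [l2 o2]]; first by split => //; constructor.
  split; first by constructor.
  by move=> xi ne; rewrite /mcat o1 // o2.
- move/EmbL_embw => [x [hx ->]]; elim: hx => [|u v hu _ IH].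
    have -> : embw (e := e) [::] = munit M.
      apply: functional_extensionality_dep => xi.
      by case: (eqVneq xi e) => [->|ne]; rewrite /embw ?dupd_eq ?dupd_neq.
    constructor.
  by rewrite embw_cat; constructor => //; apply/EmbL_embw; exists u.
Qed.

Lemma rat_bigunion (I : Type) (s : list I) (Xs : I -> chn -> Prop) :
  (forall i, rational (Xs i)) -> rational (fun C => exists i, List.In i s /\ Xs i C).
Proof.
move=> h; elim: s => [|a s IH] /=.
  by apply: rat_ext' rat_empty _ => C; split => // [[i []]].
apply: rat_ext' (rat_union (h a) IH) _ => C; split.
  by case=> [ha|[i [hi hx]]]; [exists a | exists i]; auto.
by move=> [i [[<-|hi] hx]]; [left | right; exists i].
Qed.

Lemma In_mem (T : eqType) (x : T) (s : seq T) : List.In x s <-> x \in s.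
Proof.
elim: s => [|a s IH] //=; rewrite inE; split.
  by case=> [->|/IH h]; [rewrite eqxx | rewrite h orbT].
by case/orP => [/eqP ->|/IH]; auto.
Qed.

Lemma rat_EmbL_wk e (Q : finType) (d : Q -> M e -> Q) (Xs : seq Q) p q :
  rational (EmbL (wk d Xs p q)).
Proof.
elim: Xs p q => [|s0 Xs IH] p q.
  pose s := (if p == q then [:: [::]] else [::]) ++
            [seq [:: a] | a <- [seq a <- enum (M e) | d p a == q]].
  apply: rat_EmbL_ext (rat_EmbL_fin s) _ => w; rewrite wk_nil /s List.in_app_iff.
  split.
    case=> [H|/List.in_map_iff [a [<- /In_mem ha]]].
      by left; move: H; case: eqP => [-> /= [<-|[]]|_ []].
    by right; exists a; split => //; move: ha; rewrite mem_filter => /andP [/eqP].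
  case=> [[-> ->]|[a [-> <-]]]; first by left; rewrite eqxx; left.
  right; apply/List.in_map_iff; exists a; split => //; apply/In_mem.
  by rewrite mem_filter eqxx mem_enum.
apply: rat_EmbL_ext (rat_EmbL_union (IH p q) (rat_EmbL_cat (IH p s0)
   (rat_EmbL_cat (rat_EmbL_star (IH s0 s0)) (IH s0 q)))) _ => w.
rewrite wk_cons; split.
  case=> [h|[w1 [w' [-> [h1 [w2 [w3 [-> [h2 h3]]]]]]]]]; first by left.
  by right; exists w1, w2, w3.
case=> [h|[w1 [w2 [w3 [-> [h1 [h2 h3]]]]]]]; first by left.
by right; exists w1, (w2 ++ w3); do !split => //; exists w2, w3.
Qed.

Lemma rat_EmbL_regular e (L : seq (M e) -> Prop) : regular L -> rational (EmbL L).
Proof.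
move=> [Q [q0 [d [F H]]]].
have := rat_bigunion [seq q <- enum Q | F q] (fun q => rat_EmbL_wk d (enum Q) q0 q).
move/rat_ext'; apply => C; split.
  move=> [q [/In_mem hq [[e1 _] o]]]; split => //; apply/H; rewrite e1.
  by move: hq; rewrite mem_filter => /andP [].
move=> [/H hL o]; exists (foldl d q0 (C e)); split.
  by apply/In_mem; rewrite mem_filter hL mem_enum.
by split => //; split => // i _; rewrite mem_enum.
Qed.

Lemma rat_prod_all (Ls : forall e, seq (M e) -> Prop) :
  (forall e, regular (Ls e)) -> rational (fun C : chn => forall e, Ls e (C e)).
Proof.
move=> hreg.
have aux : forall es : seq E, uniq es ->
    rational (fun C : chn => (forall e, e \in es -> Ls e (C e)) /\
                             forall e, e \notin es -> C e = [::]).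
  elim => [|a es IH] /=.
    move=> _; apply: rat_ext' (rat_fin [:: munit M]) _ => C; rewrite nth_In /=.
    split; first by case=> // <-.
    move=> [_ h]; left; apply: functional_extensionality_dep => e; by rewrite h.
  move=> /andP [aes ues].
  apply: rat_ext' (rat_prod (rat_EmbL_regular (hreg a)) (IH ues)) _ => C; split.
    move=> [C1 [C2 [[l1 o1] [[h2 o2] ->]]]]; split.
      move=> e; rewrite inE /mcat => /orP [/eqP ->|ee].
        by rewrite (o2 a aes) cats0.
      rewrite o1 /=; first exact: h2.
      by apply/eqP => ea; move: aes; rewrite -ea ee.

    move=> e; rewrite inE negb_or => /andP [ea ee].
    by rewrite /mcat o1 // o2.
  move=> [h o].
  exists (embw (C a)), (fun xi => if xi == a then [::] else C xi); split.
    by apply/EmbL_embw; exists (C a); split => //; apply: h; rewrite inE eqxx.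
  split.
    split.
      move=> e ee; case: eqP => [ea|_]; first by move: aes; rewrite -ea ee.
      by apply: h; rewrite inE ee orbT.
    move=> e ee; case: eqP => // ne; apply: o; rewrite inE negb_or ee andbT.
    exact/eqP.
  apply: functional_extensionality_dep => e; rewrite /mcat.
  case: (eqVneq e a) => [->|ne].
 by rewrite /embw dupd_eq cats0.
  by rewrite /embw (dupd_neq _ _ ne).
apply: rat_ext' (aux (enum E) (enum_uniq _)) _ => C; split.
  by move=> [h _] e; apply: h; rewrite mem_enum.
by move=> h; split => // e; rewrite mem_enum.
Qed.

Lemma recognizable_rational X : recognizable X -> rational X.
Proof.
move=> [n [Ls [hreg hX]]].
have := rat_bigunion (enum 'I_n) (fun i => rat_prod_all (hreg i)).
move/rat_ext'; apply => C; rewrite hX; split.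
  by move=> [i [_ h]]; exists i.
by move=> [i h]; exists i; split => //; apply/In_mem; rewrite mem_enum.
Qed.

End Rat.


Section Aut.
Variable A : finType.
Implicit Types L : seq A -> Prop.

Lemma regular_ext L L' : (forall w, L w <-> L' w) -> regular L -> regular L'.
Proof.
move=> e [Q [q0 [d [F H]]]]; exists Q, q0, d, F => w; rewrite -e; exact: H.
Qed.

Lemma regular_const (Pr : Prop) : regular (fun _ : seq A => Pr).
Proof.
exists unit, tt, (fun _ _ => tt), (fun _ => pbool Pr) => w.
by split => [h|/pboolP //]; apply/pboolP.
Qed.

Lemma regular_and L1 L2 : regular L1 -> regular L2 -> regular (fun w => L1 w /\ L2 w).
Proof.
move=> [Q1 [q1 [d1 [F1 H1]]]] [Q2 [q2 [d2 [F2 H2]]]].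
exists (Q1 * Q2)%type, (q1, q2), (fun q a => (d1 q.1 a, d2 q.2 a)),
  (fun q : Q1 * Q2 => F1 q.1 && F2 q.2) => w.
have aux : forall w x1 x2, foldl (fun q a => (d1 q.1 a, d2 q.2 a)) (x1, x2) w =
    (foldl d1 x1 w, foldl d2 x2 w).
  by elim=> //= a w' IH x1 x2; rewrite IH.
rewrite aux.
by rewrite H1 H2 /=; split => [[-> ->]|/andP].
Qed.

Lemma regular_cond (Pr : Prop) L : regular L -> regular (fun w => Pr /\ L w).
Proof. by move=> h; apply: regular_and (regular_const Pr) h. Qed.

Lemma regular_map (B : finType) (f : B -> A) L : regular L -> regular (fun w => L (map f w)).
Proof.
move=> [Q [q0 [d [F H]]]]; exists Q, q0, (fun q b => d q (f b)), F => w.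
have aux : forall w' q, foldl d q (map f w') = foldl (fun q b => d q (f b)) q w'.
  by elim=> //= b w' IH q; rewrite IH.
by rewrite H aux.
Qed.

Lemma RQ_fin L : regular L ->
  exists Ls, (forall x, List.In (RQ L x) Ls) /\ (forall L', List.In L' Ls -> regular L').
Proof.
move=> [Q [q0 [d [F H]]]].
exists (map (fun f : {ffun Q -> bool} => fun r => (f (foldl d q0 r) : Prop)) (enum {ffun Q -> bool})).
split.
  move=> x; apply/List.in_map_iff; exists [ffun q => F (foldl d q x)].
  split; last by apply/In_mem; rewrite mem_enum.
  apply: functional_extensionality => r; apply: propositional_extensionality.
  by rewrite /RQ H foldl_cat ffunE.
move=> L' /List.in_map_iff [f [<- _]].
by exists Q, q0, d, f.
Qed.

Lemma RQ_fin_list (Ws : list (seq A -> Prop)) : (forall L, List.In L Ws -> regular L) ->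
  exists Ls, (forall L x, List.In L Ws -> List.In (RQ L x) Ls) /\
             (forall L', List.In L' Ls -> regular L').
Proof.
elim: Ws => [|W Ws IH] hW; first by exists [::].
have [Ls1 [h1 r1]] := RQ_fin (hW W (or_introl erefl)).
have [Ls2 [h2 r2]] := IH (fun L hL => hW L (or_intror hL)).
exists (Ls1 ++ Ls2); split.
  move=> L x [<-|hL]; apply/List.in_app_iff; [left; exact: h1 | right; exact: h2].
by move=> L' /List.in_app_iff [/r1|/r2].
Qed.

Lemma class_map (Ws : list (seq A -> Prop)) : (forall L, List.In L Ws -> regular L) ->
  exists (T : finType) (g : seq A -> T), (forall t, regular (fun x => g x = t)) /\
    forall x y, g x = g y -> forall L, List.In L Ws -> RQ L x = RQ L y.
Proof.
elim: Ws => [|W Ws IH] hW.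
  exists unit, (fun _ => tt); split => // t.
  by apply: regular_ext (regular_const True) => w; case: t.
have [Q [q0 [d [F H]]]] := hW W (or_introl erefl).
have [T [g [rg hg]]] := IH (fun L hL => hW L (or_intror hL)).
pose cl (x : seq A) := [ffun q => F (foldl d q x)].
exists ({ffun Q -> bool} * T)%type, (fun x => (cl x, g x)); split.
  move=> [f t]; apply: (@regular_ext (fun x => cl x = f /\ g x = t)).
    by move=> w; split => [[-> ->]|[-> ->]].
  apply: regular_and (rg t).
  exists {ffun Q -> Q}, [ffun q => q], (fun (phi : {ffun Q -> Q}) (a : A) => [ffun q => d (phi q) a]),
    (fun phi : {ffun Q -> Q} => [ffun q => F (phi q)] == f) => w.
  have -> : forall phi : {ffun Q -> Q}, foldl (fun (phi : {ffun Q -> Q}) (a : A) => [ffun q => d (phi q) a]) phi w =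
      [ffun q => foldl d (phi q) w].
    elim: w => [|a w IHw] phi /=; first by apply/ffunP => q; rewrite ffunE.
    by rewrite IHw; apply/ffunP => q; rewrite !ffunE.
  split => [<-|/eqP <-]; [apply/eqP|]; apply/ffunP => q; by rewrite /cl !ffunE.
move=> x y [ec eg] L [<-|hL]; last exact: hg.
apply: functional_extensionality => r; apply: propositional_extensionality.
rewrite /RQ !H !foldl_cat.
have := congr1 (fun f : {ffun Q -> bool} => f (foldl d q0 r)) ec.
by rewrite /cl !ffunE => ->.
Qed.

End Aut.


Section Proto.
Variable P : cfsm.
Local Notation act := (action (fun x : edge P => msg x)).
Definition Msg := {e : edge P & msg e}.
Definition tg (e : edge P) (b : msg e) : Msg := existT (fun e => Finite.sort (msg e)) e b.
Definition tagw (e : edge P) (x : seq (msg e)) : seq Msg := map (@tg e) x.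

Fixpoint sends (s : seq act) : seq Msg :=
  match s with [::] => [::] | Snd e b :: r => tg b :: sends r | Rcv _ _ :: r => sends r end.
Fixpoint recvs (s : seq act) : seq Msg :=
  match s with [::] => [::] | Rcv e b :: r => tg b :: recvs r | Snd _ _ :: r => recvs r end.

Fixpoint lpath (j : node P) (s : st j) (acts : seq act) (q : st j) : Prop :=
  match acts with
  | [::] => s = q
  | a :: r => exists s', trans s a s' /\ lpath s' r q
  end.

Lemma sends_cat s1 s2 : sends (s1 ++ s2) = sends s1 ++ sends s2.
Proof. by elim: s1 => //= -[] e b s IH; rewrite IH. Qed.
Lemma recvs_cat s1 s2 : recvs (s1 ++ s2) = recvs s1 ++ recvs s2.
Proof. by elim: s1 => //= -[] e b s IH; rewrite IH. Qed.

Lemma lpath_cat j (s q : st j) a1 a2 :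
  lpath s (a1 ++ a2) q <-> exists m, lpath s a1 m /\ lpath m a2 q.
Proof.
elim: a1 s => [|a a1 IH] s /=; first by split => [h|[m [-> h]]] //; exists s.
split.
  by move=> [s' [t /IH [m [h1 h2]]]]; exists m; split => //; exists s'.
by move=> [m [[s' [t h1]] h2]]; exists s'; split => //; apply/IH; exists m.
Qed.

Lemma lpath_rcons j (s m q : st j) acts a :
  lpath s acts m -> trans m a q -> lpath s (rcons acts a) q.
Proof. by move=> h t; rewrite -cats1; apply/lpath_cat; exists m; split => //; exists q. Qed.

Lemma tgK e : injective (@tg e).
Proof. by move=> x y h; apply: eq_from_Tagged h. Qed.
Lemma tagw_inj e : injective (@tagw e).
Proof. exact/inj_map/tgK. Qed.

Lemma lpath_tags j (s q : st j) acts : lpath s acts q ->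
  (forall x, x \in sends acts -> tl (tag x) = j) /\ (forall x, x \in recvs acts -> hd (tag x) = j).
Proof.
elim: acts s => [|a acts IH] s /=; first by [].
move=> [s' [t /IH [h1 h2]]]; have := trans_wf t.
case: a t => e b t /= /eqP he; split => x //=; rewrite ?inE.
- by case/orP => [/eqP -> //|]; apply: h1.
- exact: h2.
- exact: h1.
- by case/orP => [/eqP -> //|]; apply: h2.
Qed.

Definition on (xi : edge P) (s : seq Msg) := [seq x <- s | tag x == xi].

Lemma on_cat xi s1 s2 : on xi (s1 ++ s2) = on xi s1 ++ on xi s2.
Proof. exact: filter_cat. Qed.

Lemma on_tagw xi e (x : seq (msg e)) : on xi (tagw x) = if e == xi then tagw x else [::].
Proof.
rewrite /on /tagw; case: eqP => [exi|ne].
  by apply/all_filterP/allP => y /mapP [? _ ->] /=; apply/eqP.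
by elim: x => //= b x ->; case: eqP.
Qed.

Lemma dupd_dupd (I : eqType) (T : I -> Type) (f : forall i, T i) i x y :
  dupd (dupd f i x) i y = dupd f i y.
Proof.
apply: functional_extensionality_dep => j; case: (eqVneq j i) => [->|ne].
  by rewrite !dupd_eq.
by rewrite !dupd_neq.
Qed.

Lemma run1 (S : cstate P) (C : chan P) j acts (q : st j) :
  reach S C -> lpath (S j) acts q ->
  (forall xi, exists z, tagw (C xi) = on xi (recvs acts) ++ z) ->
  exists C', reach (dupd S j q) C' /\
   forall xi, tagw (C xi) ++ on xi (sends acts) = on xi (recvs acts) ++ tagw (C' xi).
Proof.
elim: acts S C => [|a acts IH] S C /= hr.
  move=> <- _; exists C; split => // [|xi]; last by rewrite cats0.
  suff -> : dupd S j (S j) = S by [].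
  by apply: functional_extensionality_dep => i; case: (eqVneq i j) => [->|ne];
    rewrite ?dupd_eq ?dupd_neq.
move=> [s' [t hp]] hpre; have := trans_wf t.
move: hpre; case: a t => e b t /= hpre /eqP he.
-
  pose S1 := dupd S j s'; pose C1 := dupd C e (rcons (C e) b).
  have r1 : reach S1 C1.
    apply: reachS hr _; exists j, s'; split; first by rewrite /S1 dupd_eq.
    split; first by move=> i ne; rewrite /S1 dupd_neq.
    exists e, b; split; first by move=> xi ne; rewrite /C1 dupd_neq.
    by left; split => //; split => //; rewrite /C1 dupd_eq.
  have hp1 : lpath (S1 j) acts q by rewrite /S1 dupd_eq.
  have hpre1 : forall xi, exists z, tagw (C1 xi) = on xi (recvs acts) ++ z.
    move=> xi; have [z hz] := hpre xi; case: (eqVneq xi e) => [exi|ne].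
      subst xi; exists (z ++ [:: tg b]); rewrite /C1 dupd_eq /tagw -cats1 map_cat.
      by rewrite -/(tagw _) hz catA.
    by exists z; rewrite /C1 dupd_neq.
  have [C' [r2 h2]] := IH S1 C1 r1 hp1 hpre1.
  exists C'; split; first by move: r2; rewrite /S1 dupd_dupd.
  move=> xi; rewrite -h2 /on /= -/(on _ _); case: (eqVneq xi e) => [exi|ne].
    subst xi; rewrite /C1 dupd_eq /tagw -cats1 map_cat -catA /=.
    by [].
  by rewrite /C1 (dupd_neq _ _ ne).
- have [z hz] := hpre e; move: hz; rewrite eqxx.
  case hC: (C e) => [|b' y] //= [eb hy]; have {}eb := tgK eb; subst b'.
  pose S1 := dupd S j s'; pose C1 := dupd C e y.
  have r1 : reach S1 C1.
    apply: reachS hr _; exists j, s'; split; first by rewrite /S1 dupd_eq.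
    split; first by move=> i ne; rewrite /S1 dupd_neq.
    exists e, b; split; first by move=> xi ne; rewrite /C1 dupd_neq.
    by right; split => //; split => //; rewrite /C1 dupd_eq.
  have hp1 : lpath (S1 j) acts q by rewrite /S1 dupd_eq.
  have hpre1 : forall xi, exists z, tagw (C1 xi) = on xi (recvs acts) ++ z.
    move=> xi; case: (eqVneq xi e) => [exi|ne].
      by subst xi; exists z; rewrite /C1 dupd_eq.
    have [z' hz'] := hpre xi; exists z'; rewrite /C1 (dupd_neq _ _ ne) hz'.
    by rewrite eq_sym (negbTE ne).
  have [C' [r2 h2]] := IH S1 C1 r1 hp1 hpre1.
  exists C'; split; first by move: r2; rewrite /S1 dupd_dupd.
  move=> xi; case: (eqVneq xi e) => [exi|ne].
    subst xi; rewrite hC /= -h2 /C1 dupd_eq.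
    by [].
  by rewrite -h2 /C1 (dupd_neq _ _ ne).
Qed.


Lemma split_sends (acts : seq act) z w : sends acts = z ++ w ->
  exists a1 a2, acts = a1 ++ a2 /\ sends a1 = z.
Proof.
elim: acts z => [|a acts IH] z /=.
  by case: z => // _; exists [::], [::].
case: z => [|z0 z] hs; first by exists [::], (a :: acts).
case: a hs => e b /=.
  case=> <- /IH [a1 [a2 [-> <-]]].
  by exists (@Snd _ (fun x => msg x) e b :: a1), a2.
move=> hs; have [a1 [a2 [-> h]]] := IH (z0 :: z) hs.
by exists (@Rcv _ (fun x => msg x) e b :: a1), a2; rewrite /= h.
Qed.

Lemma regular_path (j : node P) (s0 sf : st j) (L : seq Msg -> Prop) :
  regular L -> regular (fun u => exists a, lpath s0 a sf /\ L (recvs a) /\ sends a = u).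
Proof.
move=> [Q [q0 [d [F H]]]]; apply: FQ_regular.
exists {set (st j * Q)}.
exists (fun u => [set x | pbool (exists a, lpath s0 a x.1 /\ sends a = u /\
                                     foldl d q0 (recvs a) = x.2)]).
exists (fun (R : {set (st j * Q)}) w => exists x, x \in R /\ exists a2, lpath x.1 a2 sf /\
                     F (foldl d x.2 (recvs a2)) /\ sends a2 = w).
move=> u w; split.
- move=> [a [hp [hL hs]]].
  have [a1 [a2 [ea es1]]] := split_sends hs.
  move: hp hL hs; rewrite ea lpath_cat sends_cat recvs_cat es1 => -[mid [h1 h2]] hL /catI hs2.
  exists (mid, foldl d q0 (recvs a1)); split.
    by rewrite inE; apply/pboolP; exists a1.
  by exists a2; split => //; split => //; move/H: hL; rewrite foldl_cat.
- move=> [x [hx [a2 [hp2 [hF hs2]]]]].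
  move: hx; rewrite inE => /pboolP [a1 [hp1 [hs1 hf1]]].
  exists (a1 ++ a2); split; first by apply/lpath_cat; exists x.1.
  split; last by rewrite sends_cat hs1 hs2.
  by apply/H; rewrite recvs_cat foldl_cat hf1.
Qed.

Lemma regular_tagw (e : edge P) (L : seq (msg e) -> Prop) :
  regular L -> regular (fun y : seq Msg => exists c, y = tagw c /\ L c).
Proof.
move=> [Q [q0 [d [F H]]]]; apply: FQ_regular.
exists (option Q).
exists (fun u => match excluded_middle_informative (exists u', u = tagw u') with
        | left Hex => Some (foldl d q0 (proj1_sig (constructive_indefinite_description _ Hex)))
        | right _ => None end).
exists (fun (o : option Q) w => match o with
        | Some q => exists c, w = tagw c /\ F (foldl d q c) | None => False end).
move=> u w; case: excluded_middle_informative => [Hex|Hn].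
  case: constructive_indefinite_description => u' eu /=; subst u; split.
    move=> [c [ec hc]]; have [t1 [t2 [ect [e1 e2]]]] := map_cat_inv (esym ec).
    have et1 := tagw_inj e1; subst c t1.
    by exists t2; split => //; move/H: hc; rewrite foldl_cat.
  move=> [c [-> hF]]; exists (u' ++ c); split; first by rewrite /tagw map_cat.
  by apply/H; rewrite foldl_cat.
split => // -[c [ec _]]; have [t1 [t2 [_ [e1 _]]]] := map_cat_inv (esym ec).
by apply: Hn; exists t1.
Qed.

Ltac iflia := repeat first [rewrite ifF; last by lia | rewrite ifT; last by lia].

Section Chain.
Variables (k : nat) (m : nat -> node P) (ch : nat -> edge P) (beta : edge P).
Hypotheses (Hk : 0 < k) (Hchk : ch k = beta)
  (Htl : forall t, tl (ch t) = m t) (Hhd : forall t, hd (ch t) = m t.+1)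
  (Hmk1 : m k.+1 = m 0)
  (Hminj : forall s t, s <= k -> t <= k -> m s = m t -> s = t)
  (Hmsurj : forall j, exists t, t <= k /\ m t = j)
  (Hchsurj : forall e, exists t, t <= k /\ ch t = e).

Lemma hd_beta : hd beta = m 0.
Proof. by rewrite -Hchk Hhd Hmk1. Qed.

Lemma m_neq s t : s <= k -> t <= k -> s != t -> m s != m t.
Proof. by move=> hs ht ne; apply/eqP => /Hminj => /(_ hs ht) /eqP; rewrite (negbTE ne). Qed.

Lemma tl_inj (e1 e2 : edge P) : tl e1 = tl e2 -> e1 = e2.
Proof.
have [s [hs <-]] := Hchsurj e1; have [t [ht <-]] := Hchsurj e2.
by rewrite !Htl => /Hminj -> .
Qed.

Lemma m_succ t : t <= k -> m t.+1 = if t == k then m 0 else m t.+1.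
Proof. by case: eqP => // ->. Qed.

Lemma hd_inj (e1 e2 : edge P) : hd e1 = hd e2 -> e1 = e2.
Proof.
have [s [hs <-]] := Hchsurj e1; have [t [ht <-]] := Hchsurj e2.
rewrite !Hhd (m_succ hs) (m_succ ht).
have hs' : s != k -> s.+1 <= k by move=> sk; rewrite ltn_neqAle sk hs.
have ht' : t != k -> t.+1 <= k by move=> tk; rewrite ltn_neqAle tk ht.
case: (eqVneq s k) => [->|sk]; case: (eqVneq t k) => [->|tk] //.
- by move/Hminj => /(_ isT (ht' tk)).
- by move/Hminj => /(_ (hs' sk) isT).
- by move/Hminj => /(_ (hs' sk) (ht' tk)) [->].
Qed.

Lemma ch_inj s t : s <= k -> t <= k -> ch s = ch t -> s = t.
Proof. by move=> hs ht /(congr1 (@tl P)); rewrite !Htl => /Hminj; apply. Qed.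

Lemma on_sends j (s q : st j) acts xi : lpath s acts q ->
  on xi (sends acts) = if tl xi == j then sends acts else [::].
Proof.
move=> /lpath_tags [h _]; case: eqP => [ej|nej].
  apply/all_filterP/allP => x /h; rewrite -ej => /tl_inj ->; exact: eqxx.
rewrite /on (eq_in_filter (a2 := pred0)) ?filter_pred0 // => x /h hx /=.
by apply/eqP => ex; apply: nej; rewrite -ex.
Qed.

Lemma on_recvs j (s q : st j) acts xi : lpath s acts q ->
  on xi (recvs acts) = if hd xi == j then recvs acts else [::].
Proof.
move=> /lpath_tags [_ h]; case: eqP => [ej|nej].
  apply/all_filterP/allP => x /h; rewrite -ej => /hd_inj ->; exact: eqxx.
rewrite /on (eq_in_filter (a2 := pred0)) ?filter_pred0 // => x /h hx /=.
by apply/eqP => ex; apply: nej; rewrite -ex.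
Qed.

Fixpoint Sst (p q : cstate P) t : cstate P :=
  match t with 0 => p | t'.+1 => dupd (Sst p q t') (m t') (q (m t')) end.

Lemma Sst_ge p q t j : (forall s, s < t -> m s != j) -> Sst p q t j = p j.
Proof.
elim: t => //= t IH h; rewrite dupd_neq ?IH //.
  by move=> s st; apply: h; rewrite ltnS ltnW.
by rewrite eq_sym; apply: h.
Qed.

Lemma Sst_lt p q t s : t <= k.+1 -> s < t -> Sst p q t (m s) = q (m s).
Proof.
elim: t => //= t IH ht hst.
case: (eqVneq s t) => [->|ne]; first by rewrite dupd_eq.
rewrite dupd_neq; first by apply: IH; lia.
apply: m_neq; lia.
Qed.

Lemma Sst_all p q : Sst p q k.+1 = q.
Proof.
apply: functional_extensionality_dep => j; have [t [ht <-]] := Hmsurj j.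
by rewrite Sst_lt.
Qed.


Lemma run_chain (p q : cstate P) (D0 D : chan P) (acts : node P -> seq act) (y : seq Msg) :
  reach p D0 -> (forall xi, xi != beta -> D0 xi = [::]) ->
  (forall j, lpath (p j) (acts j) (q j)) ->
  (forall t, t < k -> sends (acts (m t)) = recvs (acts (m t.+1)) ++ tagw (D (ch t))) ->
  tagw (D0 beta) = recvs (acts (m 0)) ++ y ->
  tagw (D beta) = y ++ sends (acts (m k)) -> reach q D.
Proof.
move=> r0 h0 hp hch hb0 hb.
have kn0 : (k == 0) = false by apply/negbTE; rewrite -lt0n.
have chb : forall s, s < k -> ch s != beta.
  by move=> s sk; apply/eqP; rewrite -Hchk => /ch_inj => /(_ (ltnW sk) (leqnn _)) e;
    move: sk; rewrite e ltnn.
have claim : forall t, t <= k.+1 -> exists Ct, reach (Sst p q t) Ct /\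
  (tagw (Ct beta) = if t == 0 then tagw (D0 beta) else
                    if t == k.+1 then y ++ sends (acts (m k)) else y) /\
  (forall s, s < k -> tagw (Ct (ch s)) = if t <= s then [::] else
       if t == s.+1 then sends (acts (m s)) else tagw (D (ch s))).
  elim => [_|t IH ht].
    exists D0; split => //; split => // s sk; by rewrite h0 ?chb.
  have tk : t <= k by [].
  have [Ct [rt [hbt hst]]] := IH (ltnW ht).
  have hpt : lpath (Sst p q t (m t)) (acts (m t)) (q (m t)).
    rewrite Sst_ge //; move=> s st; apply: m_neq; lia.
  have hpre : forall xi, exists z, tagw (Ct xi) = on xi (recvs (acts (m t))) ++ z.
    move=> xi; rewrite (on_recvs xi (hp (m t))).
    case: eqP => [hxi|_]; last by exists (tagw (Ct xi)).
    case: (posnP t) => [t0|tpos].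
      subst t; have -> : xi = beta by apply: hd_inj; rewrite hxi hd_beta.
      by exists y; rewrite hbt.
    have t1 : t.-1 < k by lia.
    have -> : xi = ch t.-1 by apply: hd_inj; rewrite hxi Hhd prednK.
    exists (tagw (D (ch t.-1))); rewrite hst //.
    have -> : (t <= t.-1) = false by lia.
    have -> : (t == t.-1.+1) = true by lia.
    by rewrite hch // prednK.
  have [C' [r' h']] := run1 rt hpt hpre.
  exists C'; split; first by [].
  have h'' : forall xi z, tagw (Ct xi) = on xi (recvs (acts (m t))) ++ z ->
                tagw (C' xi) = z ++ on xi (sends (acts (m t))).
    by move=> xi z hz; have := h' xi; rewrite hz -catA => /catI <-.
  have tlb : tl beta = m k by rewrite -Hchk Htl.
  split.
    case: (posnP t) => [t0|tpos].
      subst t; have e1 : tagw (Ct beta) = on beta (recvs (acts (m 0))) ++ y.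
        by rewrite hbt /= (on_recvs beta (hp (m 0))) hd_beta eqxx hb0.
      rewrite (h'' _ _ e1) (on_sends beta (hp (m 0))) tlb.
      have -> : (m k == m 0) = false by apply/negbTE/m_neq => //; lia.
      rewrite cats0 /=; have -> : (1 == k.+1) = false by lia.
      by [].
    have e1 : tagw (Ct beta) = on beta (recvs (acts (m t))) ++ y.
      rewrite (on_recvs beta (hp (m t))) hd_beta.
      have -> : (m 0 == m t) = false by apply/negbTE/m_neq => //; lia.
      rewrite hbt; have -> : (t == 0) = false by lia.
      by have -> : (t == k.+1) = false by lia.
    rewrite (h'' _ _ e1) (on_sends beta (hp (m t))) tlb /= eqSS.
    case: (eqVneq t k) => [->|ne]; first by rewrite eqxx.
    have -> : (m k == m t) = false by apply/negbTE/m_neq => //; lia.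
    by rewrite cats0.
  move=> s sk.
  have unch : m s != m t -> m s.+1 != m t -> tagw (C' (ch s)) = tagw (Ct (ch s)).
    move=> n1 n2; have e1 : tagw (Ct (ch s)) = on (ch s) (recvs (acts (m t))) ++ tagw (Ct (ch s)).
      by rewrite (on_recvs _ (hp _)) Hhd (negbTE n2).
    by rewrite (h'' _ _ e1) (on_sends _ (hp _)) Htl (negbTE n1) cats0.
  case: (ltngtP s t) => [st|ts|est].
  - case: (eqVneq s.+1 t) => [e|ne].
      subst t; have e1 : tagw (Ct (ch s)) =
          on (ch s) (recvs (acts (m s.+1))) ++ tagw (D (ch s)).
        rewrite (on_recvs _ (hp _)) Hhd eqxx hst //; iflia.
        by rewrite hch.
      rewrite (h'' _ _ e1) (on_sends _ (hp _)) Htl.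
      have -> : (m s == m s.+1) = false by apply/negbTE/m_neq => //; lia.
      by rewrite cats0; iflia.
    rewrite unch; first (rewrite hst //; iflia; done).
    + by apply: m_neq => //; lia.
    + by apply: m_neq => //; lia.
  - rewrite unch; first (rewrite hst //; iflia; done).
    + by apply: m_neq => //; lia.
    + by apply: m_neq => //; lia.
  - subst t; have e1 : tagw (Ct (ch s)) = on (ch s) (recvs (acts (m s))) ++ [::].
      rewrite (on_recvs _ (hp _)) Hhd hst //; iflia.
      by have -> : (m s.+1 == m s) = false by apply/negbTE/m_neq => //; lia.
    rewrite (h'' _ _ e1) (on_sends _ (hp _)) Htl eqxx /=.
    by iflia.
have [Ck [rk [hbk hsk]]] := claim k.+1 (leqnn _).
move: rk; rewrite Sst_all; suff -> : D = Ck by [].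
apply: functional_extensionality_dep => e; have [s [hs <-]] := Hchsurj e.
apply: tagw_inj; case: (eqVneq s k) => [->|sk].
  by rewrite Hchk hbk eqxx /= hb.
have sk' : s < k by rewrite ltn_neqAle sk hs.
by rewrite hsk //; iflia.
Qed.

Definition Inv (S : cstate P) (C : chan P) :=
  exists (p : cstate P) (c : seq (msg beta)) (acts : node P -> seq act),
  @Qset P beta p c /\ (forall j, lpath (p j) (acts j) (S j)) /\ acts (m k) = [::] /\
  (forall t, t < k -> sends (acts (m t)) = recvs (acts (m t.+1)) ++ tagw (C (ch t))) /\
  tagw c = recvs (acts (m 0)) ++ tagw (C beta).

Lemma Inv_reach S C : Inv S C -> reach S C.
Proof.
move=> [p [c [acts [[D [rD [Db Do]]] [hp [hk [hch hb]]]]]]].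
apply: (run_chain (y := tagw (C beta))) rD Do hp hch _ _.
  by rewrite Db.
by rewrite hk cats0.
Qed.

Lemma Inv_init : Inv (@init_state P) (@chan0 P).
Proof.
exists (@init_state P), [::], (fun _ => [::]); split.
  by exists (@chan0 P); split; [constructor | split].
by do !split.
Qed.

Lemma lpath_nil j (s q : st j) : lpath s [::] q -> s = q.
Proof. by []. Qed.

Lemma Inv_send S C S' C' i (q : st i) e (b : msg e) : Inv S C ->
  S' i = q -> (forall j, j != i -> S' j = S j) -> (forall xi, xi != e -> C' xi = C xi) ->
  tl e = i -> trans (S i) (@Snd _ (fun x => msg x) e b) q -> C' e = rcons (C e) b ->
  Inv S' C'.
Proof.
move=> [p [c [acts [[D [rD [Db Do]]] [hp [hk [hch hb]]]]]]] hSi hSo hCo htl ht hCe.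
have tlb : tl beta = m k by rewrite -Hchk Htl.
case: (eqVneq i (m k)) => [eik|nik].
-
  have ebeta : e = beta by apply: tl_inj; rewrite htl tlb.
  subst e.
  have aki : acts i = [::] by rewrite eik.
  have pk : p i = S i by have := hp i; rewrite aki.
  exists (dupd p i q), (rcons c b), acts; split.
    exists (dupd D beta (rcons c b)); split.
      apply: reachS rD _; exists i, q; split; first by rewrite dupd_eq.
      split; first by move=> j ne; rewrite dupd_neq.
      exists beta, b; split; first by move=> xi ne; rewrite dupd_neq.
      by left; split => //; rewrite pk Db dupd_eq.
    by split; [rewrite dupd_eq | move=> xi ne; rewrite dupd_neq // Do].
  split.
    move=> j; case: (eqVneq j i) => [->|ne].
      by rewrite dupd_eq aki hSi.
    by rewrite dupd_neq // hSo.
  split => //; split.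
    move=> t tk; rewrite hch // hCo //; apply/eqP; rewrite -Hchk => /ch_inj.
    by move=> /(_ (ltnW tk) (leqnn _)) et; move: tk; rewrite et ltnn.
  by rewrite hCe /tagw -!cats1 !map_cat -/(tagw _) -/(tagw _) hb catA.
-
  pose acts' := fun j => if j == i then rcons (acts j) (@Snd _ (fun x => msg x) e b) else acts j.
  have hr : forall j, recvs (acts' j) = recvs (acts j).
    by move=> j; rewrite /acts'; case: eqP => // _; rewrite -cats1 recvs_cat cats0.
  have hs : forall j, sends (acts' j) = sends (acts j) ++ if j == i then [:: tg b] else [::].
    by move=> j; rewrite /acts'; case: eqP => _; rewrite ?cats0 // -cats1 sends_cat.
  have enb : e != beta by apply/eqP => eb; move: nik; rewrite -htl eb tlb eqxx.
  exists p, c, acts'; split; first by exists D. split.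
    move=> j; rewrite /acts'; case: eqP => [->|ne]; last by rewrite hSo //; apply/eqP.
    by rewrite hSi; apply: (lpath_rcons (hp i)).
  split; first by rewrite /acts' eq_sym (negbTE nik) hk.
  split; last by rewrite hr hCo // eq_sym.
  move=> t tk; rewrite hr hs hch //; case: eqP => [mti|mti].
    have ete : ch t = e by apply: tl_inj; rewrite Htl mti htl.
    by rewrite ete hCe /tagw -cats1 map_cat catA.
  rewrite cats0 hCo //; apply/eqP => ete; apply: mti; by rewrite -Htl ete htl.
Qed.



Lemma back_chain (acts : node P -> seq act) t z : t < k ->
  (forall s, s < t -> exists w, sends (acts (m s)) = recvs (acts (m s.+1)) ++ w) ->
  (exists w, sends (acts (m t)) = z ++ w) ->
  exists pre : node P -> seq act, (forall j, exists suf, acts j = pre j ++ suf) /\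
   (forall s, s < t -> sends (pre (m s)) = recvs (pre (m s.+1))) /\ sends (pre (m t)) = z /\
   (forall j, (forall s, s <= t -> m s != j) -> pre j = [::]).
Proof.
elim: t z => [|t IH] z tk hyp [w hw].
  have [a1 [a2 [e1 e2]]] := split_sends hw.
  exists (fun j => if j == m 0 then a1 else [::]); split.
    by move=> j; case: eqP => [->|_]; [exists a2 | exists (acts j)].
  split => //; split; first by rewrite eqxx.
  by move=> j h; case: eqP => // ej; have := h 0 (leqnn _); rewrite ej eqxx.
have [a1 [a2 [e1 e2]]] := split_sends hw.
have [|||pre [h1 [h2 [h3 h4]]]] := IH (recvs a1); first by lia.
- by move=> s st; apply: hyp; lia.
- have [w0 hw0] := hyp t (ltnSn t).
  by exists (recvs a2 ++ w0); rewrite hw0 e1 recvs_cat catA.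
have pt : pre (m t.+1) = [::].
  by apply: h4 => s st; apply: m_neq; lia.
exists (fun j => if j == m t.+1 then a1 else pre j); split.
  move=> j; case: eqP => [->|_]; [by exists a2 | exact: h1].
split.
  move=> s st; have -> : (m s == m t.+1) = false by apply/negbTE/m_neq; lia.
  case: (eqVneq s t) => [->|ne]; first by rewrite eqxx h3.
  have -> : (m s.+1 == m t.+1) = false by apply/negbTE/m_neq; lia.
  by apply: h2; lia.
split; first by rewrite eqxx.
move=> j h; case: eqP => [ej|_]; first by have := h t.+1 (leqnn _); rewrite ej eqxx.
by apply: h4 => s st; apply: h; lia.
Qed.

Lemma Inv_recv S C S' C' i (q : st i) e (b : msg e) : Inv S C ->
  S' i = q -> (forall j, j != i -> S' j = S j) -> (forall xi, xi != e -> C' xi = C xi) ->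
  hd e = i -> trans (S i) (@Rcv _ (fun x => msg x) e b) q -> C e = b :: C' e ->
  Inv S' C'.
Proof.
move=> [p [c [acts [[D [rD [Db Do]]] [hp [hk [hch hb]]]]]]] hSi hSo hCo hhd ht hCe.
case: (eqVneq i (m k)) => [eik|nik]; last first.
  pose acts' := fun j => if j == i then rcons (acts j) (@Rcv _ (fun x => msg x) e b) else acts j.
  have hs : forall j, sends (acts' j) = sends (acts j).
    by move=> j; rewrite /acts'; case: eqP => // _; rewrite -cats1 sends_cat cats0.
  have hr : forall j, recvs (acts' j) = recvs (acts j) ++ if j == i then [:: tg b] else [::].
    by move=> j; rewrite /acts'; case: eqP => _; rewrite ?cats0 // -cats1 recvs_cat.
  exists p, c, acts'; split; first by exists D. split.
    move=> j; rewrite /acts'; case: eqP => [->|ne]; last by rewrite hSo //; apply/eqP.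
    by rewrite hSi; apply: (lpath_rcons (hp i)).
  split; first by rewrite /acts' eq_sym (negbTE nik) hk.
  split.
    move=> t tk; rewrite hs hch // hr; case: eqP => [mti|mti].
      have ete : ch t = e by apply: hd_inj; rewrite Hhd mti hhd.
      by rewrite ete hCe -catA.
    rewrite cats0 hCo //; apply/eqP => ete; apply: mti; by rewrite -Hhd ete hhd.
  rewrite hb hr; case: eqP => [m0i|m0i].
    have ete : beta = e by apply: hd_inj; rewrite hd_beta m0i hhd.
    by rewrite ete hCe -catA.
  rewrite cats0 hCo //; apply/eqP => ete; apply: m0i; by rewrite -hd_beta ete hhd.
pose k1 := k.-1.
have k1k : k1.+1 = k by rewrite /k1 prednK.
have ek : e = ch k1 by apply: hd_inj; rewrite Hhd k1k hhd eik.
have sk1 : sends (acts (m k1)) = [:: tg b] ++ tagw (C' e).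
  by rewrite hch ?k1k ?hk -?ek ?hCe //; lia.
have [pre [h1 [h2 [h3 h4]]]] := @back_chain acts k1 [:: tg b] (ltac:(lia))
   (fun s sk => ex_intro _ _ (hch s (ltac:(lia)))) (ex_intro _ _ sk1).
pose pre2 := fun j => if j == i then [:: @Rcv _ (fun x => msg x) e b] else pre j.
pose acts' := fun j => drop (size (pre2 j)) (acts j).
have hsplit : forall j, j != i -> acts j = pre2 j ++ acts' j.
  move=> j ne; rewrite /acts' /pre2 (negbTE ne); have [suf ->] := h1 j.
  by rewrite drop_size_cat.
have aki : acts i = [::] by rewrite eik.
have hmid : forall j, exists mid : st j, lpath (p j) (pre2 j) mid /\ lpath mid (acts' j) (S' j).
  move=> j; case: (eqVneq j i) => [->|ne].
    exists q; rewrite /acts' /pre2 eqxx aki /=; split => //.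
    by exists q; split => //; have := hp i; rewrite aki /= => ->.
  have := hp j; rewrite (hsplit j ne) hSo // => /lpath_cat.
  by move=> [mid h]; exists mid.
pose p' := fun j => proj1_sig (constructive_indefinite_description _ (hmid j)).
have hp' : forall j, lpath (p j) (pre2 j) (p' j) /\ lpath (p' j) (acts' j) (S' j).
  by move=> j; rewrite /p'; case: constructive_indefinite_description.
have m0i : m 0 != i by rewrite eik; apply: m_neq; lia.
pose n0 := size (recvs (pre2 (m 0))).
pose y := recvs (acts' (m 0)) ++ tagw (C beta).
have hy : tagw c = recvs (pre2 (m 0)) ++ y.
  by rewrite hb (hsplit _ m0i) recvs_cat catA.
have hc' : tagw (drop n0 c) = y by rewrite /tagw map_drop -/(tagw _) hy drop_size_cat.
have bne : beta != e.
  by rewrite ek -Hchk; apply/eqP => /ch_inj; move=> /(_ (leqnn _)) h; have := h (ltac:(lia)); lia.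
pose D' := dupd (@chan0 P) beta (drop n0 c).
have hD'o : forall xi, xi != beta -> D' xi = [::] by move=> xi ne; rewrite /D' dupd_neq.
exists p', (drop n0 c), acts'; split.
  exists D'; split; last by split; [rewrite /D' dupd_eq | exact: hD'o].
  apply: (run_chain (y := y)) rD Do (fun j => proj1 (hp' j)) _ _ _.
  - move=> t tk; rewrite hD'o ?cats0; last first.
      rewrite -Hchk; apply/eqP => /ch_inj h; have := h (ltac:(lia)) (leqnn _); lia.
    have -> : pre2 (m t) = pre (m t) by rewrite /pre2 eik (negbTE (m_neq _ _ _)) //; lia.
    case: (eqVneq t k1) => [->|tk1].
      by rewrite k1k /pre2 eik eqxx h3.
    have -> : pre2 (m t.+1) = pre (m t.+1) by rewrite /pre2 eik (negbTE (m_neq _ _ _)) //; lia.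
    by apply: h2; lia.
  - by rewrite Db.
  - by rewrite /D' dupd_eq hc' /pre2 -eik eqxx /= cats0.
split; first by move=> j; case: (hp' j).
split; first by rewrite /acts' /pre2 -eik eqxx aki.
split; last by rewrite hc' /y hCo.
move=> t tk.
have mti : m t != i by rewrite eik; apply: m_neq; lia.
have := hch t tk; rewrite (hsplit _ mti) sends_cat.
case: (eqVneq t k1) => [etk|tk1].
  subst t; rewrite k1k -eik aki /= -ek hCe.
  have -> : pre2 (m k1) = pre (m k1) by rewrite /pre2 (negbTE mti).
  by rewrite h3 /= => [[->]]; rewrite /acts' aki.
have mt1 : m t.+1 != i by rewrite eik; apply: m_neq; lia.
rewrite (hsplit _ mt1) recvs_cat.
have -> : pre2 (m t) = pre (m t) by rewrite /pre2 (negbTE mti).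
have -> : pre2 (m t.+1) = pre (m t.+1) by rewrite /pre2 (negbTE mt1).
rewrite h2; last by lia.
rewrite -catA => /catI ->; rewrite hCo //.
by rewrite ek; apply/eqP => /ch_inj h; have := h (ltac:(lia)) (ltac:(lia)); lia.
Qed.

Lemma reach_Inv S C : reach S C -> Inv S C.
Proof.
elim => [|S1 C1 S' C' _ IH [i [q [hSi [hSo [e [b [hCo [[htl [ht hCe]]|[hhd [ht hCe]]]]]]]]]]].
- exact: Inv_init.
- exact: Inv_send IH hSi hSo hCo htl ht hCe.
- exact: Inv_recv IH hSi hSo hCo hhd ht hCe.
Qed.

Definition Qm (p : cstate P) : seq Msg -> Prop := fun y => exists c, y = tagw c /\ @Qset P beta p c.
Definition V (S p : cstate P) (t : nat) (L : seq Msg -> Prop) : seq Msg -> Prop :=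
  fun u => exists a, lpath (p (m t)) a (S (m t)) /\ L (recvs a) /\ sends a = u.
Fixpoint Pch (S p : cstate P) (C : chan P) t : seq Msg -> Prop :=
  match t with
  | 0 => RQ (Qm p) (tagw (C beta))
  | t'.+1 => RQ (V S p t' (Pch S p C t')) (tagw (C (ch t')))
  end.

Lemma Pch_spec S p C t r : Pch S p C t r <->
  exists c (acts : nat -> seq act), @Qset P beta p c /\
   (forall s, s < t -> lpath (p (m s)) (acts s) (S (m s))) /\
   (forall s, s.+1 < t -> sends (acts s) = recvs (acts s.+1) ++ tagw (C (ch s))) /\
   (if t is t'.+1 then tagw c = recvs (acts 0) ++ tagw (C beta) /\
                       sends (acts t') = r ++ tagw (C (ch t'))
    else tagw c = r ++ tagw (C beta)).
Proof.
elim: t r => [|t IH] r /=.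
  rewrite /RQ /Qm; split.
    by move=> [c [e hq]]; exists c, (fun _ => [::]); split => //; split => //.
  by move=> [c [acts [hq [_ [_ e]]]]]; exists c.
rewrite /RQ /V; split.
  move=> [a [hpa [/IH [c [acts [hq [hl [hc hif]]]]] ha]]].
  exists c, (fun s => if s == t then a else acts s); split => //; split.
    by move=> s st; case: eqP => [->|ne] //; apply: hl; lia.
  split.
    move=> s st; have -> : (s == t) = false by lia.
    case: eqP => [e|ne]; last by apply: hc; lia.
    by move: hif; rewrite -e => -[_].
  split; last by rewrite eqxx.
  case: (posnP t) hif => [->|tp] hif /=; first by [].
  have -> : (0 == t) = false by lia.
  destruct t as [|t']; first by lia.
  by case: hif.
move=> [c [acts [hq [hl [hc [hb ha]]]]]].
exists (acts t); split; first exact: hl.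
split => //; apply/IH; exists c, acts; split => //; split.
  by move=> s st; apply: hl; lia.
split; first by move=> s st; apply: hc; lia.
case: t IH hl hc ha => [|t] IH hl hc ha //=.
by split => //; apply: hc.
Qed.

Lemma Inv_Pch S C : Inv S C <-> exists p : cstate P, p (m k) = S (m k) /\ Pch S p C k [::].
Proof.
have [k' ek] : exists k', k = k'.+1 by exists k.-1; lia.
split.
- move=> [p [c [acts [hq [hp [hk [hch hb]]]]]]].
  exists p; split; first by have := hp (m k); rewrite hk.
  apply/Pch_spec; exists c, (fun s => acts (m s)); split => //; split.
    by move=> s _; apply: hp.
  split; first by move=> s sk; apply: hch; lia.
  rewrite ek; split => //.
  by rewrite hch ?ek // -ek hk.
- move=> [p [pk /Pch_spec [c [acts [hq [hl [hc hif]]]]]]].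
  pose idx := fun j => proj1_sig (constructive_indefinite_description _ (Hmsurj j)).
  have hidx : forall j, idx j <= k /\ m (idx j) = j.
    by move=> j; rewrite /idx; case: constructive_indefinite_description.
  have idx_m : forall s, s <= k -> idx (m s) = s.
    by move=> s sk; have [h1 h2] := hidx (m s); apply: Hminj.
  move: hif; rewrite ek => -[hb hlast].
  pose acts_n := fun j => if j == m k then [::] else acts (idx j).
  have an : forall t, t < k -> acts_n (m t) = acts t.
    move=> t tk; rewrite /acts_n; have -> : (m t == m k) = false by apply/negbTE/m_neq; lia.
    by rewrite idx_m //; lia.
  exists p, c, acts_n; split => //; split.
    move=> j; rewrite /acts_n; case: eqP => [->|ne]; first by rewrite pk.
    have [ik mi] := hidx j.
    have ilt : idx j < k by rewrite ltn_neqAle ik andbT; apply/eqP => e; apply: ne; rewrite -mi e.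
    by have := hl (idx j) ilt; rewrite mi.
  split; first by rewrite /acts_n eqxx.
  split; last by rewrite an.
  move=> t tk; rewrite an //.
  case: (eqVneq t k') => [->|ne].
    by rewrite -ek /acts_n eqxx hlast.
  rewrite an; last by lia.
  by apply: hc; lia.
Qed.

Lemma Lang_Inv S C : @Lang P S C <-> Inv S C.
Proof. by split => [/reach_Inv|/Inv_reach]. Qed.

Lemma all_states : exists l : list (cstate P), forall p, List.In p l.
Proof.
exists (map (fun f : {dffun forall j : node P, st j} => fun j => f j)
            (enum {dffun forall j : node P, st j})).
move=> p; apply/List.in_map_iff; exists (finfun p : {dffun forall j : node P, st j}); split.
  by apply: functional_extensionality_dep => j; rewrite ffunE.
by apply/In_mem; rewrite mem_enum.
Qed.

Hypothesis HQ : forall S, regular (@Qset P beta S).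

Lemma regular_Qm p : regular (Qm p).
Proof. exact: regular_tagw (HQ p). Qed.

Lemma regular_V S p t L : regular L -> regular (V S p t L).
Proof. exact: regular_path. Qed.

Lemma Fam_ex S t : exists Fam : list (seq Msg -> Prop),
  (forall p C, List.In (Pch S p C t) Fam) /\ forall L, List.In L Fam -> regular L.
Proof.
have [l hl] := all_states.
elim: t => [|t [Fam [hF rF]]].
  have [|Ls [h1 h2]] := @RQ_fin_list _ (map Qm l).
    by move=> L /List.in_map_iff [p [<- _]]; apply: regular_Qm.
  exists Ls; split => // p C; apply: h1; apply/List.in_map_iff; by exists p.
have [|Ls [h1 h2]] := @RQ_fin_list _ (List.flat_map (fun p => map (V S p t) Fam) l).
  move=> L /List.in_flat_map [p [_ /List.in_map_iff [L' [<- hL']]]].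
  exact/regular_V/rF.
exists Ls; split => // p C /=; apply: h1; apply/List.in_flat_map; exists p; split => //.
by apply/List.in_map_iff; exists (Pch S p C t).
Qed.

Lemma chain_recog S : recognizable (@Lang P S).
Proof.
have [l hl] := all_states.
pose FamF t := proj1_sig (constructive_indefinite_description _ (Fam_ex S t)).
have hFam : forall t, (forall p C, List.In (Pch S p C t) (FamF t)) /\
                      forall L, List.In L (FamF t) -> regular L.
  by move=> t; rewrite /FamF; case: constructive_indefinite_description.
pose Wall := map Qm l ++ List.flat_map (fun t => List.flat_map (fun p => map (V S p t) (FamF t)) l)
                                  (iota 0 k).
have [|T [g [rg hg]]] := @class_map _ Wall.
  move=> L /List.in_app_iff [/List.in_map_iff [p [<- _]]|]; first exact: regular_Qm.
  move=> /List.in_flat_map [t [_ /List.in_flat_map [p [_ /List.in_map_iff [L' [<- hL']]]]]].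
  exact/regular_V/(proj2 (hFam t)).
have sat : forall C C' : chan P, (forall e, g (tagw (C e)) = g (tagw (C' e))) ->
    forall t, t <= k -> forall p, Pch S p C t = Pch S p C' t.
  move=> C C' hCC; elim => [|t IH] tk p /=.
    apply: hg (hCC beta) _ _; apply/List.in_app_iff; left.
    by apply/List.in_map_iff; exists p.
  rewrite IH; last by lia.
  apply: hg (hCC (ch t)) _ _; apply/List.in_app_iff; right.
  apply/List.in_flat_map; exists t; split; first by apply/In_mem; rewrite mem_iota; lia.
  apply/List.in_flat_map; exists p; split => //.
  by apply/List.in_map_iff; exists (Pch S p C' t); split => //; apply: (proj1 (hFam t)).
have satL : forall C C' : chan P, (forall e, g (tagw (C e)) = g (tagw (C' e))) ->
    @Lang P S C -> @Lang P S C'.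
  move=> C C' hCC; rewrite !Lang_Inv !Inv_Pch => -[p [pk hp]]; exists p; split => //.
  by rewrite -(sat _ _ hCC k (leqnn _)).
exists #|{ffun edge P -> T}|.
exists (fun (i : 'I_#|{ffun edge P -> T}|) (e : edge P) (x : seq (msg e)) => g (tagw x) = enum_val i e /\
          exists C0, @Lang P S C0 /\ forall e', g (tagw (C0 e')) = enum_val i e').
split.
  move=> i e; apply: (@regular_ext _ (fun x => (exists C0, @Lang P S C0 /\
       forall e', g (tagw (C0 e')) = enum_val i e') /\ g (tagw x) = enum_val i e)).
    by move=> w; split => -[].
  by apply: regular_cond; apply: regular_map (rg _).
move=> C; split.
  move=> hC; exists (enum_rank [ffun e => g (tagw (C e))]) => e.
  rewrite enum_rankK ffunE; split => //; exists C; split => // e'.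
  by rewrite ffunE.
move=> [i hi]; have [_ [C0 [hC0 h0]]] := hi beta.
apply: satL hC0 => e; rewrite h0; by case: (hi e).
Qed.

End Chain.
End Proto.


Lemma cyclic_chain (P : cfsm) (Hc : cyclic P) (beta : edge P) :
  (exists k (m : nat -> node P) (ch : nat -> edge P),
     0 < k /\ ch k = beta /\ (forall t, tl (ch t) = m t) /\ (forall t, hd (ch t) = m t.+1) /\
      m k.+1 = m 0 /\ (forall s t, s <= k -> t <= k -> m s = m t -> s = t) /\
      (forall j, exists t, t <= k /\ m t = j) /\ (forall e, exists t, t <= k /\ ch t = e))
  \/ (forall e : edge P, e = beta).
Proof.
move: Hc => [k [v [w [[vi hv1 hv2] [[wi hw1 hw2] hc]]]]].
case: (posnP k) => [k0|kpos].
  right => e; subst k; rewrite -(hw2 e) -(hw2 beta).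
  by rewrite (ord1 (wi e)) (ord1 (wi beta)).
left; pose i0 := wi beta.
pose rot (t : nat) : 'I_k.+1 := inord ((i0 + 1 + t) %% k.+1).
have rotv : forall t, nat_of_ord (rot t) = (i0 + 1 + t) %% k.+1.
  by move=> t; rewrite /rot inordK // ltn_pmod.
have rot_surj : forall i : 'I_k.+1, exists t, t <= k /\ rot t = i.
  move=> i; exists ((i + k * i0.+1) %% k.+1); split; first by rewrite -ltnS ltn_pmod.
  apply: val_inj => /=; rewrite rotv /= modnDmr.
  have -> : i0 + 1 + (i + k * i0.+1) = i0.+1 * k.+1 + i by rewrite mulnS; lia.
  by rewrite modnMDl modn_small.
exists k, (fun t => v (rot t)), (fun t => w (rot t)); do !split => //.
- have -> : rot k = i0.
    apply: val_inj => /=; rewrite rotv.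
    have -> : i0 + 1 + k = i0 + k.+1 by lia.
    by rewrite modnDr modn_small.
  by rewrite /i0 hw2.
- by move=> t; case: (hc (rot t)).
- move=> t; case: (hc (rot t)) => _ ->; congr v; apply: val_inj.
  rewrite /= rotv -addn1 modnDml rotv; congr (_ %% _); lia.
- congr v; apply: val_inj => /=; rewrite !rotv.
  have -> : i0 + 1 + k.+1 = i0 + 1 + 0 + k.+1 by lia.
  by rewrite modnDr.
- move=> s t sk tk /(can_inj hv1) /(congr1 (@nat_of_ord _)); rewrite !rotv.
  move/eqP; rewrite eqn_modDl !modn_small ?ltnS //; by move/eqP.
- move=> j; have [t [tk et]] := rot_surj (vi j); exists t; split => //.
  by rewrite et hv2.
- move=> e; have [t [tk et]] := rot_surj (wi e); exists t; split => //.
  by rewrite et hw2.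
Qed.

Lemma d_to_a (P : cfsm) (Hc : cyclic P) (beta : edge P) :
  (forall S, regular (@Qset P beta S)) -> recognizable_channel_property P.
Proof.
move=> HQ S.
case: (cyclic_chain Hc beta) => [[k [m [ch [Hk [Hchk [Htl [Hhd [Hmk1 [Hminj [Hms Hcs]]]]]]]]]]|hall].
  exact: chain_recog Hk Hchk Htl Hhd Hmk1 Hminj Hms Hcs HQ S.
exists 1, (fun _ e x => exists C, @Lang P S C /\ C e = x); split.
  move=> _ e; have ee := hall e; subst e.
  apply: regular_ext (HQ S) => x; split.
    by move=> [C [hC [<- _]]]; exists C.
  move=> [C [hC <-]]; exists C; split => //; split => // xi.
  by rewrite (hall xi) eqxx.
move=> C; split => [hC|[_ h]]; first by exists ord0 => e; exists C.
have [C' [hC' e']] := h beta; suff -> : C = C' by [].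
apply: functional_extensionality_dep => e; have ee := hall e; subst e.
by rewrite e'.
Qed.

Theorem theorem8p3 (P : cfsm) (Hcyc : cyclic P) :
  [/\ (recognizable_channel_property P <-> rational_channel_property P),
      (rational_channel_property P <->
         (forall (beta : edge P) (S : cstate P), regular (@Qset P beta S))) &
      ((forall (beta : edge P) (S : cstate P), regular (@Qset P beta S)) <->
         (exists beta : edge P, forall S : cstate P, regular (@Qset P beta S)))].
Proof.
have ab : recognizable_channel_property P -> rational_channel_property P.
  by move=> h S; apply: recognizable_rational (h S).
have bc : rational_channel_property P ->
          forall (beta : edge P) (S : cstate P), regular (@Qset P beta S).
  by move=> h beta S; apply: FQ_regular; apply: (rational_slice beta (h S)).
have cd : (forall (beta : edge P) (S : cstate P), regular (@Qset P beta S)) ->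
          exists beta : edge P, forall S : cstate P, regular (@Qset P beta S).
  move=> h; move: (Hcyc) => [k [v [w _]]]; by exists (w ord0).
have da : (exists beta : edge P, forall S : cstate P, regular (@Qset P beta S)) ->
          recognizable_channel_property P.
  by move=> [beta hb]; apply: d_to_a Hcyc beta hb.
split; split; auto.
Qed.
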